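(* Let $G=(V,\Sigma,R,S)$ be a context-free grammar in Greibach Normal Form. For all $w,z\in\Sigma^*$: if $\pi_S(w)=\pi_S(z)$, then $w\backslash L(G)=z\backslash L(G)$.
   Context: A context-free grammar $G=(V,\Sigma,R,S)$ in Greibach Normal Form has every production of the form $S\to\epsilon$ or $A\to a\,\beta$ with $a\in\Sigma$, $\beta\in(V\setminus\{S\})^*$; $L(G)$ is its language. Let $\delta_G(a,A)=\{\beta\in V^*:(A\to a\,\beta)\in R\}$. Define $\pi:\Sigma^*\times V^*\to\mathcal{P}(V^* )$ recursively by $\pi(t,\alpha)=\{\alpha\}$ if $t=\epsilon$; $\pi(t,\alpha)=\emptyset$ if $t\neq\epsilon$ and $\alpha=\epsilon$; and otherwise $\pi(t,\alpha)=\bigcup_{\beta\in\delta_G(t_0,\alpha_0)}\pi(t_{1:},\beta\alpha_{1:})$, where $t_0$ is the first character of $t$, $t_{1:}$ the rest of $t$, $\alpha_0$ the first symbol of $\alpha$ and $\alpha_{1:}$ the rest of $\alpha$. Let $\pi_S(t)=\pi(t,S)$ (the stack consisting of the single symbol $S$). A string $x$ belongs to $L(G)$ iff $\epsilon\in\pi_S(x)$. The left quotient of a language $L$ by $w\in\Sigma^*$ is $w\backslash L=\{z\in\Sigma^*: wz\in L\}$. *)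

(* Defs.v *)
From mathcomp Require Import all_boot.
Set Implicit Arguments. Unset Strict Implicit. Unset Printing Implicit Defensive.

Record cfg (V Sigma : finType) := CFG {
  rules : seq (V * seq (Sigma + V));
  start : V }.

Definition is_GNF (V Sigma : finType) (G : cfg V Sigma) : Prop :=
  forall A rhs, (A, rhs) \in rules G ->
    (A = start G /\ rhs = [::]) \/
    exists a beta, rhs = inl a :: map inr beta /\ start G \notin beta.

Inductive step (V Sigma : finType) (G : cfg V Sigma) :
  seq (Sigma + V) -> seq (Sigma + V) -> Prop :=
| Step u A rhs v : (A, rhs) \in rules G ->
    step G (u ++ inr A :: v) (u ++ rhs ++ v).

Inductive derives (V Sigma : finType) (G : cfg V Sigma) :
  seq (Sigma + V) -> seq (Sigma + V) -> Prop :=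
| derives_refl s : derives G s s
| derives_step s t r : step G s t -> derives G t r -> derives G s r.

Definition lang (V Sigma : finType) (G : cfg V Sigma) (x : seq Sigma) : Prop :=
  derives G [:: inr (start G)] (map inl x).

Definition lquot (Sigma : Type) (w : seq Sigma) (L : seq Sigma -> Prop) :
  seq Sigma -> Prop := fun z => L (w ++ z).

(* delta_G(a, A) = { beta in V^* | (A -> a beta) in R } *)
Definition delta (V Sigma : finType) (G : cfg V Sigma) (a : Sigma) (A : V) :
  seq (seq V) :=
  [seq map (fun s => if s is inr B then B else A) (behead p.2)
  | p <- rules G & (p.1 == A) &&
      match p.2 with
      | inl b :: rest => (b == a) && all (fun s => if s is inr _ then true else false) rest
      | _ => false end].

(* pi(t, alpha), as a list of stacks (read as a set) *)
Fixpoint pi (V Sigma : finType) (G : cfg V Sigma) (t : seq Sigma) (alpha : seq V)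
  : seq (seq V) :=
  match t with
  | [::] => [:: alpha]
  | t0 :: t' =>
    match alpha with
    | [::] => [::]
    | a0 :: alpha' => flatten [seq pi G t' (beta ++ alpha') | beta <- delta G t0 a0]
    end
  end.

Definition pi_S (V Sigma : finType) (G : cfg V Sigma) (t : seq Sigma) :=
  pi G t [:: start G].

(* Main.v *)
Require Import Defs.
From mathcomp Require Import all_boot.
Set Implicit Arguments. Unset Strict Implicit. Unset Printing Implicit Defensive.

Section S.
Variables (V Sigma : finType) (G : cfg V Sigma).

Inductive gen : seq (Sigma + V) -> seq Sigma -> Prop :=
| gen_nil : gen [::] [::]
| gen_t a s x : gen s x -> gen (inl a :: s) (a :: x)
| gen_n A rhs s y x : (A, rhs) \in rules G -> gen rhs y -> gen s x ->
    gen (inr A :: s) (y ++ x).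

Lemma gen_cat1 p q x : gen (p ++ q) x ->
  exists x1 x2, x = x1 ++ x2 /\ gen p x1 /\ gen q x2.
Proof.
elim: p x => [|c p IH] x /=.
  by move=> H; exists [::], x; split=> //; split=> //; constructor.
move=> H; inversion H; subst.
- have [x1 [x2 [-> [K1 K2]]]] := IH _ H3.
  by exists (a :: x1), x2; split=> //; split=> //; constructor.
- have [x1 [x2 [-> [K1 K2]]]] := IH _ H5.
  exists (y ++ x1), x2; rewrite catA; split=> //; split=> //.
  by econstructor; eauto.
Qed.

Lemma gen_cat2 p q x1 x2 : gen p x1 -> gen q x2 -> gen (p ++ q) (x1 ++ x2).
Proof.
move=> H; elim: H x2 => //=.
- by move=> a s x _ IH x2 Hq; constructor; apply: IH.
- by move=> A rhs s y x Hr Hy _ _ IH x2 Hq; rewrite -catA; econstructor; eauto.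
Qed.

Lemma gen_inr_inv A s w : gen (inr A :: s) w ->
  exists rhs y x, [/\ (A, rhs) \in rules G, gen rhs y, gen s x & w = y ++ x].
Proof. by move=> H; inversion H; subst; do 3 eexists; split; eauto. Qed.

Lemma gen_inl_inv a s w : gen (inl a :: s) w ->
  exists x, gen s x /\ w = a :: x.
Proof. by move=> H; inversion H; subst; eauto. Qed.

Lemma gen_nil_inv x : gen [::] x -> x = [::].
Proof. by move=> H; inversion H. Qed.

Lemma derives_trans s t r : derives G s t -> derives G t r -> derives G s r.
Proof.
by elim=> // s0 t0 r0 H _ IH Htr; apply: derives_step H (IH Htr).
Qed.

Lemma derives_ctx u v s t : derives G s t -> derives G (u ++ s ++ v) (u ++ t ++ v).
Proof.
elim=> [s0|s0 t0 r0 H _ IH]; first by constructor.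
apply: derives_step IH.
case: H => u0 A rhs v0 Hr.
have := Step (u ++ u0) (v0 ++ v) Hr.
by rewrite -!catA /=.
Qed.

Lemma gen_derives s x : gen s x -> derives G s (map inl x).
Proof.
elim=> [|a s0 x0 _ IH|A rhs s0 y x0 Hr _ IH1 _ IH2]; first by constructor.
- by have := derives_ctx [:: inl a] [::] IH; rewrite /= !cats0.
- have H1 : step G (inr A :: s0) (rhs ++ s0) by exact: (Step [::] s0 Hr).
  apply: derives_step H1 _.
  have := derives_ctx [::] s0 IH1; rewrite /= => H2.
  apply: derives_trans H2 _.
  have := derives_ctx (map inl y) [::] IH2; rewrite !cats0 map_cat; exact.
Qed.

Lemma gen_map x : gen (map inl x) x.
Proof. by elim: x => [|a x IH] /=; constructor. Qed.

Lemma derives_gen s r : derives G s r -> forall x, r = map inl x -> gen s x.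
Proof.
elim=> [s0 x ->|s0 t0 r0 H _ IH x Hx]; first exact: gen_map.
have Ht := IH x Hx.
case: H Ht => u A rhs v Hr Ht.
have [x1 [x2 [-> [H1 H2]]]] := gen_cat1 Ht.
have [y1 [y2 [-> [H3 H4]]]] := gen_cat1 H2.
apply: gen_cat2 => //; econstructor; eauto.
Qed.

Lemma lang_gen x : lang G x <-> gen [:: inr (start G)] x.
Proof.
split; first by move=> H; apply: derives_gen H _ _.
by move=> H; apply: gen_derives.
Qed.

Definition unw (A : V) (s : Sigma + V) := if s is inr B then B else A.

Lemma delta_GNF a A beta : is_GNF G ->
  beta \in delta G a A <-> (A, inl a :: map inr beta) \in rules G /\ start G \notin beta.
Proof.
move=> HG; split.
- case/mapP => p; rewrite mem_filter => /andP [/andP [/eqP Hp1 Hc] Hp] ->.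
  have := HG p.1 p.2; rewrite -surjective_pairing => /(_ Hp).
  case=> [[_ Hrhs]|[a' [beta0 [Hrhs Hs]]]]; first by rewrite Hrhs in Hc.
  rewrite Hrhs /= in Hc *; case/andP: Hc => /eqP Ha _; subst a'.
  have -> : map (unw A) (map inr beta0) = beta0.
    by rewrite -map_comp map_id.
  split=> //; by rewrite -Hp1 -Hrhs -surjective_pairing.
- case=> Hr Hs.
  have -> : beta = map (unw A) (behead (A, inl a :: map inr beta).2).
    by rewrite /= -map_comp map_id.
  apply: map_f; rewrite mem_filter Hr /= eqxx /= andbT.
  by rewrite eqxx /=; elim: beta {Hr Hs}.
Qed.

Definition inv (alpha : seq V) := alpha = [:: start G] \/ start G \notin alpha.

Lemma main t : is_GNF G -> forall alpha x, inv alpha ->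
  gen (map inr alpha) (t ++ x) <->
  exists2 beta, beta \in Defs.pi G t alpha & gen (map inr beta) x.
Proof.
move=> HG; elim: t => [|a t IH] alpha x Hinv /=.
  split; first by move=> H; exists alpha => //; rewrite inE.
  by case=> beta; rewrite inE => /eqP ->.
case: alpha Hinv => [|A alpha'] Hinv /=.
  by split=> [/gen_nil_inv //|[]].
have Hal : start G \notin alpha'.
  case: Hinv => [[_ ->] //|]; by rewrite inE negb_or => /andP [].
split.
- move=> /gen_inr_inv [rhs [y [x0 [Hr Hy Hs0 E]]]].
  have := HG _ _ Hr; case=> [[HA Hrhs]|[b [beta [Hrhs Hs]]]].
    subst; rewrite (gen_nil_inv Hy) /= in E.
    have Ha : alpha' = [::].
      by case: Hinv => [[]|] //; rewrite inE eqxx.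
    by subst; move: Hs0 => /gen_nil_inv; rewrite ?E.
  subst; have [y1 [Hy1 Ey]] := gen_inl_inv Hy; subst y.
  case: E => Hab Hx; subst b.
  have Hc : gen (map inr (beta ++ alpha')) (t ++ x).
    by rewrite map_cat Hx; apply: gen_cat2.
  have Hinv' : inv (beta ++ alpha') by right; rewrite mem_cat negb_or Hs.
  have [beta' Hb' Hg] := (IH _ x Hinv').1 Hc.
  exists beta' => //; apply/flattenP.
  exists (Defs.pi G t (beta ++ alpha')) => //; apply: map_f.
  by apply/delta_GNF.
- case=> beta' /flattenP [l /mapP [beta Hb ->] Hb'] Hg.
  have [Hr Hs] := (delta_GNF _ _ _ HG).1 Hb.
  have Hinv' : inv (beta ++ alpha') by right; rewrite mem_cat negb_or Hs.
  have := (IH _ x Hinv').2 (ex_intro2 _ _ beta' Hb' Hg).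
  rewrite map_cat => /gen_cat1 [x1 [x2 [Hx [H1 H2]]]].
  have -> : a :: t ++ x = (a :: x1) ++ x2 by rewrite /= Hx.
  econstructor; eauto; constructor => //.
Qed.

End S.

Theorem lemma2 (V Sigma : finType) (G : cfg V Sigma) (w z : seq Sigma) :
  is_GNF G ->
  pi_S G w =i pi_S G z ->
  forall x, lquot w (lang G) x <-> lquot z (lang G) x.
Proof.
move=> HG Heq x; rewrite /lquot.
have Hi : inv G [:: start G] by left.
have Ew := main w HG x Hi; have Ez := main z HG x Hi.
split=> /lang_gen.
- move=> /Ew [b Hb Hg]; apply/lang_gen/Ez; exists b => //.
  by have := Heq b; rewrite /pi_S => <-.
- move=> /Ez [b Hb Hg]; apply/lang_gen/Ew; exists b => //.
  by have := Heq b; rewrite /pi_S => ->.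
Qed.
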